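(* Consider the group $G^2_3=\langle a,b,c\mid a^2=b^2=c^2=1,\ bca=acb,\ cab=bac,\ cba=abc\rangle$, which as a monoid (semigroup with identity) has the same presentation. Let $<$ be the deg-lex order on $\{a,b,c\}^*$ with $a<b<c$. Then the set $R'\subseteq\mathbb{F}\langle a,b,c\rangle$ consisting of (i) $x^2-1$ for $x\in\{a,b,c\}$; (ii) $bca-acb$; (iii) $cab-bac$; (iv) $cba-abc$; (v) $b(ac)^mb-(ca)^m$ for all integers $m\ge1$, generates the same ideal as the defining relations of $G^2_3$ (so $\mathbb{F}G^2_3=\mathbb{F}\langle a,b,c\mid R'\rangle$), and $R'$ is a Gröbner–Shirshov basis with respect to $<$.
   Context: $G^2_3$ is the Manturov $(2,3)$-group with $a=a_{12}$, $b=a_{13}$, $c=a_{23}$. The deg-lex order compares words first by length, then lexicographically using $a<b<c$. $\overline g$ denotes the $<$-largest monomial of $g\neq 0$; $g$ is monic if that monomial has coefficient $1$. Gröbner–Shirshov basis: for monic $f,g$, if $w=\overline f b=a'\overline g$ with $a',b\in X^*$ and $|\overline f|+|\overline g|>|w|$, then $(f,g)_w=fb-a'g$ (intersection composition); if $w=\overline f=a'\overline g b$, then $(f,g)_w=f-a'gb$ (inclusion composition). For monic $S$, $p$ is trivial modulo $(S,w)$ if $p=\sum\alpha_i u_is_iv_i$ with $\alpha_i\in\mathbb{F}$, $u_i,v_i$ words, $s_i\in S$, $u_i\overline{s_i}v_i<w$. A monic set $S$ is a Gröbner–Shirshov basis if every composition of elements of $S$ is trivial modulo $(S,w)$. *)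

(* Defs.v *)
(* Free associative algebra F<a,b,c> modelled as formal
   finite linear combinations of words (lists of terms), compared through
   their coefficient functions. *)
From mathcomp Require Import all_boot all_order all_algebra.
Set Implicit Arguments. Unset Strict Implicit. Unset Printing Implicit Defensive.
Import Order.TTheory GRing.Theory Num.Theory.
Local Open Scope ring_scope.

Definition letter := 'I_3.
Definition la : letter := @Ordinal 3 0 isT.
Definition lb : letter := @Ordinal 3 1 isT.
Definition lc : letter := @Ordinal 3 2 isT.

Definition word := seq letter.

(* lexicographic comparison (used for words of equal length) *)
Fixpoint lexlt (u v : word) : bool :=
  match u, v with
  | x :: u', y :: v' => (x < y)%N || ((x == y) && lexlt u' v')
  | _, _ => false
  end.

Definition wlt (u v : word) : bool :=
  (size u < size v)%N || ((size u == size v) && lexlt u v).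
Definition wle (u v : word) : bool := (u == v) || wlt u v.

Section NCPoly.
Variable F : fieldType.

Definition ncpoly := seq (F * word).

Definition coef (p : ncpoly) (w : word) : F := \sum_(t <- p | t.2 == w) t.1.

Definition scale (al : F) (p : ncpoly) : ncpoly := [seq (al * t.1, t.2) | t <- p].
Definition umul (u : word) (p : ncpoly) (v : word) : ncpoly :=
  [seq (t.1, u ++ t.2 ++ v) | t <- p].
Definition psub (p q : ncpoly) : ncpoly := p ++ scale (-1) q.

Definition lead_is (p : ncpoly) (w : word) : Prop :=
  coef p w != 0 /\ forall w', coef p w' != 0 -> wle w' w.

Definition monic (p : ncpoly) : Prop := exists w, lead_is p w /\ coef p w = 1.

Definition lincomb (l : seq (F * word * ncpoly * word)) : ncpoly :=
  flatten [seq let: (al, u, s, v) := t in scale al (umul u s v) | t <- l].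

Definition in_ideal (S : ncpoly -> Prop) (p : ncpoly) : Prop :=
  exists l : seq (F * word * ncpoly * word),
    (forall t, t \in l -> S t.1.2) /\ coef p =1 coef (lincomb l).

Definition trivial_mod (S : ncpoly -> Prop) (p : ncpoly) (w : word) : Prop :=
  exists l : seq (F * word * ncpoly * word),
    (forall t, t \in l ->
       let: (al, u, s, v) := t in
       S s /\ forall ws, lead_is s ws -> wlt (u ++ ws ++ v) w)
    /\ coef p =1 coef (lincomb l).

(* Groebner-Shirshov basis w.r.t. deg-lex: S monic and all intersection and
   inclusion compositions trivial *)
Definition GS_basis (S : ncpoly -> Prop) : Prop :=
  (forall f, S f -> monic f) /\
  forall f g wf wg, S f -> S g -> lead_is f wf -> lead_is g wg ->
    (forall (a' b w : word), w = wf ++ b -> w = a' ++ wg ->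
        (size w < size wf + size wg)%N ->
        trivial_mod S (psub (umul [::] f b) (umul a' g [::])) w) /\
    (forall (a' b : word), wf = a' ++ wg ++ b ->
        trivial_mod S (psub f (umul a' g b)) wf).

Definition binom (u v : word) : ncpoly := [:: (1, u); (-1, v)].

Definition R_G23 (p : ncpoly) : Prop :=
  (exists x : letter, p = binom [:: x; x] [::]) \/
  p = binom [:: lb; lc; la] [:: la; lc; lb] \/
  p = binom [:: lc; la; lb] [:: lb; la; lc] \/
  p = binom [:: lc; lb; la] [:: la; lb; lc].

Definition pw (m : nat) (u : word) : word := flatten (nseq m u).

Definition R'_G23 (p : ncpoly) : Prop :=
  R_G23 p \/
  (exists m : nat, (1 <= m)%N /\
     p = binom (lb :: pw m [:: la; lc] ++ [:: lb]) (pw m [:: lc; la])).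

End NCPoly.

(* Main.v *)
Require Import Defs.
From mathcomp Require Import all_boot all_order all_algebra.
From mathcomp Require Import zify ring.
Set Implicit Arguments. Unset Strict Implicit. Unset Printing Implicit Defensive.
Import Order.TTheory GRing.Theory Num.Theory.

Lemma lexlt_irr u : lexlt u u = false.
Proof. by elim: u => //= x u ->; rewrite ltnn eqxx. Qed.

Lemma lexlt_asym u v : lexlt u v -> lexlt v u = false.
Proof.
elim: u v => [|x u IH] [|y v] //= /orP[lt|/andP[/eqP e h]].
  by rewrite ltnNge ltnW //= ; apply/negP => /andP[/eqP e]; move: lt; rewrite e ltnn.
by subst; rewrite ltnn eqxx IH.
Qed.

Lemma lexlt_trans u v w : lexlt u v -> lexlt v w -> lexlt u w.
Proof.
elim: u v w => [|x u IH] [|y v] [|z w] //= /orP[lt1|/andP[/eqP e1 h1]] /orP[lt2|/andP[/eqP e2 h2]].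
- by rewrite (ltn_trans lt1 lt2).
- by subst; rewrite lt1.
- by subst; rewrite lt2.
- by subst; rewrite eqxx (IH _ _ h1 h2) orbT.
Qed.

Lemma lexlt_catl p u v : lexlt (p ++ u) (p ++ v) = lexlt u v.
Proof. by elim: p => //= x p ->; rewrite ltnn eqxx. Qed.

Lemma lexlt_catr u v s t : size u = size v -> lexlt u v -> lexlt (u ++ s) (v ++ t).
Proof.
elim: u v => [|x u IH] [|y v] //= [e] /orP[->//|/andP[/eqP e1 h]].
by subst; rewrite eqxx (IH _ e h) orbT.
Qed.

Lemma lexlt_size u v : lexlt u v -> lexlt u v. Proof. by []. Qed.

Lemma wlt_irr u : wlt u u = false.
Proof. by rewrite /wlt ltnn eqxx lexlt_irr. Qed.

Lemma wlt_asym u v : wlt u v -> wlt v u = false.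
Proof.
rewrite /wlt => /orP[lt|/andP[/eqP e h]].
  by case: ltngtP lt.
by rewrite e ltnn eqxx lexlt_asym.
Qed.

Lemma wlt_trans u v w : wlt u v -> wlt v w -> wlt u w.
Proof.
rewrite /wlt => /orP[lt1|/andP[/eqP e1 h1]] /orP[lt2|/andP[/eqP e2 h2]].
- by rewrite (ltn_trans lt1 lt2).
- by rewrite -e2 lt1.
- by rewrite e1 lt2.
- by rewrite e1 e2 eqxx (lexlt_trans h1 h2) orbT.
Qed.

Lemma wlt_mono u r l v : wlt r l -> wlt (u ++ r ++ v) (u ++ l ++ v).
Proof.
rewrite /wlt !size_cat => /orP[lt|/andP[/eqP e h]].
  by rewrite ltn_add2l ltn_add2r lt.
by rewrite e eqxx lexlt_catl lexlt_catr // orbT.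
Qed.

Lemma wle_antisym u v : wle u v -> wle v u -> u = v.
Proof.
rewrite /wle => /orP[/eqP//|h] /orP[/eqP//|h'].
by rewrite (wlt_asym h) in h'.
Qed.

Lemma wlt_size u v : (size u < size v)%N -> wlt u v.
Proof. by rewrite /wlt => ->. Qed.

Lemma wlt_lex u v : size u = size v -> lexlt u v -> wlt u v.
Proof. by rewrite /wlt => -> ->; rewrite eqxx orbT. Qed.

Lemma pw0 u : pw 0 u = [::]. Proof. by []. Qed.
Lemma pwS n u : pw n.+1 u = u ++ pw n u. Proof. by []. Qed.
Lemma pwD m n u : pw (m + n) u = pw m u ++ pw n u.
Proof. by elim: m => // m IH; rewrite addSn !pwS IH catA. Qed.
Lemma pwSr n u : pw n.+1 u = pw n u ++ u.
Proof. by rewrite -addn1 pwD /pw /= cats0. Qed.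
Lemma size_pw n u : size (pw n u) = (n * size u)%N.
Proof. by elim: n => //= n IH; rewrite pwS size_cat IH mulSn. Qed.

Lemma cat_split (s t u v : word) : s ++ t = u ++ v ->
  (exists r, u = s ++ r /\ t = r ++ v) \/ (exists r, s = u ++ r /\ v = r ++ t).
Proof.
elim: s u => [|x s IH] [|y u] /=.
- by move=> ->; left; exists [::].
- by move=> ->; left; exists (y :: u).
- by move=> <-; right; exists (x :: s).
- case=> -> /IH [[r [-> ->]]|[r [-> ->]]]; [left|right]; by exists r.
Qed.

Lemma split_pw (x y : letter) m (s t : word) : s ++ t = pw m [:: x; y] ->
  exists j k, (m = j + k /\ s = pw j [:: x; y] /\ t = pw k [:: x; y])%N \/
              (m = j + k.+1 /\ s = pw j [:: x; y] ++ [:: x] /\ t = y :: pw k [:: x; y])%N.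
Proof.
elim: m s => [|m IH] [|z s] /=.
- by move=> ->; exists 0%N, 0%N; left.
- by [].
- by move=> ->; exists 0%N, m.+1; left.
- rewrite pwS /= => -[-> e]; case: s e => [|z' s] /=.
    by move=> ->; exists 0%N, m; right.
  case=> -> /IH [j [k [[-> [-> ->]]|[-> [-> ->]]]]]; exists j.+1, k; [left|right].
    by rewrite addSn pwS.
  by rewrite addSn pwS.
Qed.

Definition Bw (n : nat) : word := lb :: pw n [:: la; lc] ++ [:: lb].
Definition Cw (n : nat) : word := pw n [:: lc; la].

Lemma split_B m (a o : word) : a ++ o = Bw m -> o != [::] ->
  (a = [::] /\ o = Bw m) \/
  (exists j k, m = (j + k)%N /\ a = lb :: pw j [:: la; lc] /\ o = pw k [:: la; lc] ++ [:: lb]) \/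
  (exists j k, m = (j + k.+1)%N /\ a = lb :: pw j [:: la; lc] ++ [:: la] /\ o = lc :: pw k [:: la; lc] ++ [:: lb]).
Proof.
case: a => [|z a] /=; first by move=> ->; left.
case=> -> /cat_split [[r [/esym /split_pw [j [k [[-> [-> ->]]|[-> [-> ->]]]]] ->]]|[r [-> e]]] no.
- by right; left; exists j, k.
- by right; right; exists j, k.
- case: r e => [|z' r] e; last first.
    have := congr1 size e; rewrite /= size_cat; case: o no e => //= ? ? ? ? ?; lia.
  right; left; exists m, 0%N; rewrite addn0 cats0; split => //.
Qed.

Inductive rule : word -> word -> Prop :=
| r_sq x : rule [:: x; x] [::]
| r_bca : rule [:: lb; lc; la] [:: la; lc; lb]
| r_cab : rule [:: lc; la; lb] [:: lb; la; lc]
| r_cba : rule [:: lc; lb; la] [:: la; lb; lc]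
| r_B n : rule (Bw n) (Cw n).

Inductive red : word -> word -> Prop :=
| red_refl x : red x x
| red_st u l r v y : rule l r -> red (u ++ r ++ v) y -> red (u ++ l ++ v) y.

Lemma red1 x u l r v y : x = u ++ l ++ v -> rule l r -> red (u ++ r ++ v) y -> red x y.
Proof. by move=> ->; apply: red_st. Qed.

Lemma red_trans x y z : red x y -> red y z -> red x z.
Proof. by elim=> // u l r v y' ru _ IH /IH; apply: red_st. Qed.

Lemma red_ctx p q x y : red x y -> red (p ++ x ++ q) (p ++ y ++ q).
Proof.
elim=> [x'|u l r v y' ru _ IH]; first exact: red_refl.
apply: (red1 (u := p ++ u) (v := v ++ q) _ ru); first by rewrite -!catA.
by move: IH; rewrite -!catA.
Qed.

Lemma red_ctxl p x y : red x y -> red (p ++ x) (p ++ y).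
Proof. by move/(red_ctx p [::]); rewrite !cats0. Qed.
Lemma red_ctxr q x y : red x y -> red (x ++ q) (y ++ q).
Proof. by move/(red_ctx [::] q). Qed.

Lemma rule_lt l r : rule l r -> wlt r l.
Proof.
case=> [x|||| n]; try by apply: wlt_lex.
  by apply: wlt_size.
by apply: wlt_size; rewrite /Bw /Cw /= size_cat !size_pw /=; lia.
Qed.

Definition joinable x y := exists z, red x z /\ red y z.

Lemma join_refl x : joinable x x.
Proof. by exists x; split; apply: red_refl. Qed.

Lemma red_bC n : red (lb :: Cw n) (pw n [:: la; lc] ++ [:: lb]).
Proof.
elim: n => [|n IH]; first exact: red_refl.
apply: (red1 (u := [::]) (v := Cw n) _ r_bca) => //.
have := red_ctxl [:: la; lc] IH; rewrite pwS -catA; exact.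
Qed.

Lemma red_Cb n : red (Cw n ++ [:: lb]) (lb :: pw n [:: la; lc]).
Proof.
elim: n => [|n IH]; first exact: red_refl.
apply: (red1 (u := Cw n) (v := [::]) _ r_cab); first by rewrite /Cw pwSr -catA.
have := red_ctxr [:: la; lc] IH; rewrite pwSr /= ?cats0 -?catA; exact.
Qed.

Lemma cancel1 (x y : letter) j k :
  red (pw (j + k) [:: x; y] ++ pw k [:: y; x]) (pw j [:: x; y]).
Proof.
elim: k => [|k IH]; first by rewrite addn0 cats0; exact: red_refl.
apply: (red1 (u := pw (j + k) [:: x; y] ++ [:: x]) (v := x :: pw k [:: y; x]) _ (r_sq y)).
  by rewrite addnS pwSr pwS -!catA.
apply: (red1 (u := pw (j + k) [:: x; y]) (v := pw k [:: y; x]) _ (r_sq x)).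
  by rewrite -!catA.
exact: IH.
Qed.

Lemma cancel2 (x y : letter) j k :
  red (pw k [:: x; y] ++ pw (k + j) [:: y; x]) (pw j [:: y; x]).
Proof.
elim: k => [|k IH]; first exact: red_refl.
apply: (red1 (u := pw k [:: x; y] ++ [:: x]) (v := x :: pw (k + j) [:: y; x]) _ (r_sq y)).
  by rewrite addSn pwSr pwS -!catA.
apply: (red1 (u := pw k [:: x; y]) (v := pw (k + j) [:: y; x]) _ (r_sq x)).
  by rewrite -!catA.
exact: IH.
Qed.

Ltac inj := repeat (match goal with
 | H : _ :: _ = _ :: _ |- _ => injection H; clear H; intros
 | H : [::] = _ :: _ |- _ => discriminate H
 | H : _ :: _ = [::] |- _ => discriminate H
 | H : is_true ([::] != [::]) |- _ => discriminate H
 | H : is_true false |- _ => discriminate H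
 | H : @eq nat _ _ |- _ => discriminate H
 | H : @eq 'I_3 ?a ?b |- _ =>
    (subst a || subst b || (have := congr1 val H; clear H;
       let e := fresh "e" in intro e; simpl in e; (discriminate e || clear e)))
 | H : @eq letter ?a ?b |- _ =>
    (subst a || subst b || (have := congr1 val H; clear H;
       let e := fresh "e" in intro e; simpl in e; (discriminate e || clear e)))
 | H : ?a = ?b |- _ => (is_var a; subst a) || (is_var b; subst b)
 end; simpl in * ).

Lemma pwB_cat n m b : pw n [:: la; lc] ++ [:: lb] = (pw m [:: la; lc] ++ [:: lb]) ++ b ->
  b = [::] /\ n = m.
Proof.
have cnt k : count_mem lb (pw k [:: la; lc]) = 0%N by elim: k => //= k ->.
move=> e; have := congr1 (count_mem lb) e; rewrite !count_cat !cnt /= => c.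
case/lastP: b e c => [|b' z] e c.
  by split => //; have := congr1 size e; rewrite cats0 !size_cat !size_pw /=; lia.
have := congr1 (last la) e; rewrite !last_cat last_rcons /= => ez.
by rewrite -ez -cats1 count_cat /= in c; lia.
Qed.

Lemma join_BB j n : joinable (lb :: pw j [:: la; lc] ++ Cw n) (Cw j ++ pw n [:: la; lc] ++ [:: lb]).
Proof.
case: (leqP n j) => h.
- have -> : j = (j - n + n)%N by lia.
  exists (lb :: pw (j - n) [:: la; lc]); split.
    exact: (red_ctxl [:: lb] (cancel1 la lc (j - n) n)).
  apply: red_trans (red_Cb (j - n)).
  rewrite catA; apply: red_ctxr; exact: cancel1.
- have -> : n = (j + (n - j))%N by lia.
  exists (pw (n - j) [:: la; lc] ++ [:: lb]); split; last first.
    rewrite catA; apply: red_ctxr; exact: cancel2.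
  apply: red_trans (red_bC (n - j)).
  exact: (red_ctxl [:: lb] (cancel2 la lc (n - j) j)).
Qed.

Lemma join_Bcba j : joinable (lb :: (pw j [:: la; lc] ++ [:: la]) ++ [:: la; lb; lc])
   (Cw (j + 1) ++ [:: la]).
Proof.
exists (Cw j ++ [:: lc]); split.
  apply: (red1 (u := lb :: pw j [:: la; lc]) (v := [:: lb; lc]) _ (r_sq la)).
    by rewrite /= -!catA.
  apply: (red1 (u := [::]) (v := [:: lc]) _ (r_B j)); first by rewrite /Bw /= -!catA.
  exact: red_refl.
apply: (red1 (u := Cw j ++ [:: lc]) (v := [::]) _ (r_sq la)).
  by rewrite /Cw addn1 pwSr -!catA.
by rewrite /= !cats0; exact: red_refl.
Qed.

Ltac rs u v R := apply: (red1 (u := u) (v := v) _ R); [by [] | simpl].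
Ltac rf := exact: red_refl.

Lemma overlap l1 r1 l2 r2 a o b : rule l1 r1 -> rule l2 r2 -> l1 = a ++ o -> l2 = o ++ b ->
  o != [::] -> joinable (a ++ r2) (r1 ++ b).
Proof.
move=> h1 h2 e1 e2 no; case: h1 e1 => [x|||| m] e1.
1-4: case: h2 e2 => [x'|||| n] e2; case: a e1 => [|y [|z [|t [|s a]]]] /= e1; inj;
  try (rewrite /Bw in e2; case: n e2 => [|n] /= e2; inj).
- exact: join_refl.
- exact: join_refl.
- exists [:: lc; la]; split; last rf. rs (@nil letter) (@nil letter) (r_B 1); rf.
- exists [:: la; lb]; split; last rf. rs (@nil letter) [:: lc] r_cba; rs [:: la; lb] (@nil letter) (r_sq lc); rf.
- exists [:: lb; la]; split; last rf. rs (@nil letter) [:: lc] r_cab; rs [:: lb; la] (@nil letter) (r_sq lc); rf.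
- exact: join_refl.
- exact: join_refl.
- exists (pw n.+1 [:: la; lc] ++ [:: lb]); split; [exact: red_bC | rf].
- exists [:: lb; lc]; split; first rf. rs [:: la] (@nil letter) r_cba; rs (@nil letter) [:: lb; lc] (r_sq la); rf.
- exact: join_refl.
- exists [:: la; lc]; split.
    rs (@nil letter) [:: la; lc] (r_sq lb); rf.
  rs [:: la; lc] (@nil letter) (r_sq lb); rf.
- exists [:: lc; la]; split; first rf. rs (@nil letter) (@nil letter) (r_B 1); rf.
- exists [:: lb]; split.
    rs [:: lc] [:: lc; lb] (r_sq la); rs (@nil letter) [:: lb] (r_sq lc); rf.
  rs [:: lb; la] [:: la] (r_sq lc); rs [:: lb] (@nil letter) (r_sq la); rf.
- exact: join_refl.
- exists [:: lc; la]; split; first rf. rs (@nil letter) (@nil letter) (r_B 1); rf.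
- exists (Cw n.+2); split; first rf. apply: (red1 (u := [::]) (v := [::]) _ (r_B n.+2)); [by rewrite cats0 | rewrite /= cats0; rf].
- exists [:: lc; lb]; split; first rf. rs [:: la] (@nil letter) r_bca; rs (@nil letter) [:: lc; lb] (r_sq la); rf.
- exact: join_refl.
- exists (la :: Cw n); split.
    rs (@nil letter) (la :: Cw n) (r_sq lc); rf.
  rs [:: la; lb] (pw n [:: la; lc] ++ [:: lb]) (r_sq lc).
  apply: (red1 (u := [:: la]) (v := [::]) _ (r_B n)); [by rewrite /Bw cats0 | rewrite /= cats0; rf].
have := split_B (esym e1) no; clear e1.
case=> [[? ?]|[[j [k [? [? ?]]]]|[j [k [? [? ?]]]]]];
  case: h2 e2 => [x'|||| n] e2; subst.
all: try (case: k e2 no => [|k] e2 no); try rewrite /Bw in e2; rewrite ?addn0 /= in e2 *; inj.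
- by case: m H => [|m] /= H; inj; exact: join_refl.
- by case: m H => [|m] /= H; inj.
- by case: (pwB_cat H) => -> ->; rewrite cats0; exact: join_refl.
- exists (lb :: pw j [:: la; lc]); split; first by rewrite cats0; rf.
  exact: red_Cb.
- exists (Cw j.+1); split; last by rewrite /Cw pwSr; rf.
  apply: (red1 (u := [::]) (v := [::]) _ (r_B j.+1)); first by rewrite /Bw pwSr /= -!catA.
  rewrite /= cats0; rf.
- exact: join_BB.
- exact: join_Bcba.
Qed.


Lemma inclusion l1 r1 l2 r2 a b : rule l1 r1 -> rule l2 r2 -> l1 = a ++ l2 ++ b ->
  joinable (a ++ r2 ++ b) r1.
Proof.
move=> h1 h2 e1; case: h1 e1 => [x|||| m] e1.
1-4: case: h2 e1 => [x'|||| n] e1; try (rewrite /Bw in e1; case: n e1 => [|n] e1);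
  case: a e1 => [|y [|z [|t [|s a]]]] /= e1; inj.
1-5: exact: join_refl.
have no : l2 ++ b != [::] by case: h2.
have := split_B (esym e1) no; clear e1.
case=> [[? e]|[[j [k [? [? e]]]]|[j [k [? [? e]]]]]]; subst;
  case: h2 e no => [x'|||| n] e no.
all: try (case: k e no => [|k] e no); try rewrite /Bw in e; try (case: m e => [|m] e);
  rewrite ?addn0 /= in e *; inj.
- exact: join_refl.
- by case: (pwB_cat (n := 0) (esym H)) => -> <-; exact: join_refl.
- by case: (pwB_cat (n := m.+1) (esym H)) => -> <-; rewrite cats0; exact: join_refl.
- by have := congr1 size H; rewrite !size_cat /=; lia.
Qed.

Section Alg.
Local Open Scope ring_scope.
Variable F : fieldType.
Implicit Types p q : ncpoly F.

Definition ind (u w : word) : F := if u == w then 1 else 0.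

Lemma coef_nil w : coef ([::] : ncpoly F) w = 0.
Proof. by rewrite /coef big_nil. Qed.

Lemma coef_cons (c : F) u p w : coef ((c, u) :: p) w = ind u w * c + coef p w.
Proof. by rewrite /coef big_cons /ind /=; case: (u == w); rewrite ?mul1r ?mul0r ?add0r. Qed.

Lemma coef_cat p q w : coef (p ++ q) w = coef p w + coef q w.
Proof. by rewrite /coef big_cat. Qed.

Lemma coef_scale al p w : coef (scale al p) w = al * coef p w.
Proof.
elim: p => [|[c u] p IH]; first by rewrite /= !coef_nil mulr0.
by rewrite /= !coef_cons IH mulrDr; congr (_ + _); rewrite mulrCA.
Qed.

Lemma coef_binom u v w : coef (binom F u v) w = ind u w - ind v w.
Proof. by rewrite /binom !coef_cons coef_nil mulr1 mulrN1 addr0. Qed.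

Lemma lincomb_cons (t : F * word * ncpoly F * word) l :
  lincomb (t :: l) = (let: (al, u, s, v) := t in scale al (umul u s v)) ++ lincomb l.
Proof. by []. Qed.

Lemma lincomb_cat (l1 l2 : seq (F * word * ncpoly F * word)) :
  lincomb (l1 ++ l2) = lincomb l1 ++ lincomb l2.
Proof. by rewrite /lincomb map_cat flatten_cat. Qed.

Section Triv.
Variable S : ncpoly F -> Prop.

Lemma triv_eq p q w : coef p =1 coef q -> trivial_mod S q w -> trivial_mod S p w.
Proof. by move=> e [l [h e']]; exists l; split => // x; rewrite e e'. Qed.

Lemma triv0 p w : coef p =1 (fun _ => 0) -> trivial_mod S p w.
Proof. by move=> e; exists [::]; split => // x; rewrite e coef_nil. Qed.

Lemma triv_cat p q w : trivial_mod S p w -> trivial_mod S q w -> trivial_mod S (p ++ q) w.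
Proof.
move=> [l1 [h1 e1]] [l2 [h2 e2]]; exists (l1 ++ l2); split.
  by move=> t; rewrite mem_cat => /orP[/h1|/h2].
by move=> x; rewrite lincomb_cat !coef_cat e1 e2.
Qed.

Definition scl (al : F) (t : F * word * ncpoly F * word) :=
  let: (al', u, s, v) := t in (al * al', u, s, v).

Lemma coef_lincomb_scl al l w : coef (lincomb (map (scl al) l)) w = al * coef (lincomb l) w.
Proof.
elim: l => [|[[[al' u] s] v] l IH]; first by rewrite /= coef_nil mulr0.
by rewrite map_cons !lincomb_cons /= !coef_cat !coef_scale IH mulrDr mulrA.
Qed.

Lemma triv_scale al p w : trivial_mod S p w -> trivial_mod S (scale al p) w.
Proof.
move=> [l [h e]]; exists (map (scl al) l); split.
  by move=> t /mapP [[[[al' u] s] v] /h /= ? ->].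
by move=> x; rewrite coef_lincomb_scl coef_scale e.
Qed.

Lemma triv_gen s u v w : S s -> (forall ws, lead_is s ws -> wlt (u ++ ws ++ v) w) ->
  trivial_mod S (umul u s v) w.
Proof.
move=> hs hl; exists [:: (1, u, s, v)]; split.
  by move=> t; rewrite mem_seq1 => /eqP ->.
by move=> x; rewrite lincomb_cons /= coef_cat coef_nil addr0 coef_scale mul1r.
Qed.

End Triv.

Lemma ind_neq u v : u != v -> ind u v = 0.
Proof. by rewrite /ind => /negbTE ->. Qed.

Lemma lead_binom l r : wlt r l -> lead_is (binom F l r) l.
Proof.
move=> h; have nrl : r != l by apply/eqP => e; rewrite e wlt_irr in h.
split; first by rewrite coef_binom /ind eqxx (negbTE nrl) subr0 oner_eq0.
move=> w'; rewrite coef_binom /ind.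
case: (eqVneq l w') => [-> _|nlw]; first by rewrite /wle eqxx.
case: (eqVneq r w') => [<- _|nrw]; first by rewrite /wle h orbT.
by rewrite subrr eqxx.
Qed.

Lemma lead_uniq p w1 w2 : lead_is p w1 -> lead_is p w2 -> w1 = w2.
Proof.
by move=> [n1 h1] [n2 h2]; apply: wle_antisym; [apply: h2 | apply: h1].
Qed.

Lemma lead_binomE l r ws : wlt r l -> lead_is (binom F l r) ws -> ws = l.
Proof. by move=> h /lead_uniq; apply; apply: lead_binom. Qed.

End Alg.

Section Main.
Local Open Scope ring_scope.
Variable F : fieldType.

Lemma coef_umul_binom u l r v w :
  coef (umul u (binom F l r) v) w = ind F (u ++ l ++ v) w - ind F (u ++ r ++ v) w.
Proof. by rewrite /umul /binom /= !coef_cons coef_nil mulr1 mulrN1 addr0. Qed.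

Section S.
Variable S : ncpoly F -> Prop.
Hypothesis hS : forall l r, rule l r -> S (binom F l r).

Lemma red_triv x y w : red x y -> wlt x w -> trivial_mod S (binom F x y) w.
Proof.
elim=> [x'|u l r v y' ru _ IH] hx.
  by apply: triv0 => w'; rewrite coef_binom subrr.
apply: (@triv_eq _ _ _ (umul u (binom F l r) v ++ binom F (u ++ r ++ v) y')).
  by move=> w'; rewrite coef_cat coef_umul_binom !coef_binom; ring.
apply: triv_cat.
  apply: triv_gen; first exact: hS.
  by move=> ws /(lead_binomE (rule_lt ru)) ->.
by apply: IH; apply: wlt_trans hx; apply: wlt_mono; apply: rule_lt.
Qed.

Lemma join_triv x y w : joinable x y -> wlt x w -> wlt y w -> trivial_mod S (binom F x y) w.
Proof.
move=> [z [rx ry]] hx hy.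
apply: (@triv_eq _ _ _ (binom F x z ++ scale (-1) (binom F y z))).
  by move=> w'; rewrite coef_cat coef_scale !coef_binom; ring.
apply: triv_cat; first exact: red_triv.
by apply: triv_scale; exact: red_triv.
Qed.
End S.

Lemma R'_rule (p : ncpoly F) : R'_G23 p <-> exists l r, rule l r /\ p = binom F l r.
Proof.
split.
  case=> [[[x ->]|[->|[->|->]]]|[m [_ ->]]].
  - by exists [:: x; x], [::]; split => //; exact: r_sq.
  - by do 2 eexists; split; [exact: r_bca|].
  - by do 2 eexists; split; [exact: r_cab|].
  - by do 2 eexists; split; [exact: r_cba|].
  - by exists (Bw m), (Cw m); split => //; exact: r_B.
case=> l [r [h ->]]; case: h => [x|||| [|n]].
- by left; left; exists x.
- by left; right; left.
- by left; right; right; left.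
- by left; right; right; right.
- by left; left; exists lb.
- by right; exists n.+1.
Qed.

Lemma hR' l r : rule l r -> R'_G23 (binom F l r).
Proof. by move=> h; apply/R'_rule; exists l, r. Qed.

Lemma GS : GS_basis (@R'_G23 F).
Proof.
split.
  move=> f /R'_rule [l [r [h ->]]]; exists l; split; first exact: lead_binom (rule_lt h).
  rewrite coef_binom /ind eqxx; case: eqP => [e|_]; last by rewrite subr0.
  by move: (rule_lt h); rewrite e wlt_irr.
move=> f g wf wg /R'_rule [l1 [r1 [h1 ->]]] /R'_rule [l2 [r2 [h2 ->]]] lf lg.
rewrite (lead_binomE (rule_lt h1) lf) (lead_binomE (rule_lt h2) lg) {lf lg}.
split.
- move=> a b w e1 e2 hs.
  have e : l1 ++ b = a ++ l2 by rewrite -e1 -e2.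
  case: (cat_split e) => [[r [ea eb]]|[o [ea eb]]].
    by move: hs; rewrite e2 ea !size_cat; lia.
  have no : o != [::].
    by apply/eqP => o0; move: hs; rewrite e2 ea o0 cats0 !size_cat; lia.
  have j := overlap h1 h2 ea eb no.
  apply: (@triv_eq _ _ _ (binom F (a ++ r2) (r1 ++ b))).
    move=> w'; rewrite /psub coef_cat coef_scale !coef_umul_binom coef_binom /= !cats0 e.
    ring.
  apply: join_triv => //; first exact: hR'.
    by rewrite e2; have := wlt_mono a [::] (rule_lt h2); rewrite !cats0.
  by rewrite e1; exact: (wlt_mono [::] b (rule_lt h1)).
- move=> a b e.
  have j := inclusion h1 h2 e.
  apply: (@triv_eq _ _ _ (binom F (a ++ r2 ++ b) r1)).
    move=> w'; rewrite /psub coef_cat coef_scale coef_umul_binom !coef_binom -e.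
    ring.
  apply: join_triv => //; first exact: hR'.
    by rewrite e; exact: wlt_mono (rule_lt h2).
  exact: rule_lt.
Qed.

End Main.

Section Ideal.
Local Open Scope ring_scope.
Variable F : fieldType.
Section S.
Variable S : ncpoly F -> Prop.

Lemma ideal_eq p q : coef p =1 coef q -> in_ideal S q -> in_ideal S p.
Proof. by move=> e [l [h e']]; exists l; split => // x; rewrite e e'. Qed.

Lemma ideal_cat p q : in_ideal S p -> in_ideal S q -> in_ideal S (p ++ q).
Proof.
move=> [l1 [h1 e1]] [l2 [h2 e2]]; exists (l1 ++ l2); split.
  by move=> t; rewrite mem_cat => /orP[/h1|/h2].
by move=> x; rewrite lincomb_cat !coef_cat e1 e2.
Qed.

Lemma ideal_scale al p : in_ideal S p -> in_ideal S (scale al p).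
Proof.
move=> [l [h e]]; exists (map (scl al) l); split.
  by move=> t /mapP [[[[al' u] s] v] /h /= ? ->].
by move=> x; rewrite coef_lincomb_scl coef_scale e.
Qed.

Lemma ideal_gen s u v : S s -> in_ideal S (umul u s v).
Proof.
move=> hs; exists [:: (1, u, s, v)]; split.
  by move=> t; rewrite mem_seq1 => /eqP ->.
by move=> x; rewrite lincomb_cons /= coef_cat coef_nil addr0 coef_scale mul1r.
Qed.

Lemma ideal_lincomb (l : seq (F * word * ncpoly F * word)) :
  (forall t, t \in l -> forall u v, in_ideal S (umul u t.1.2 v)) -> in_ideal S (lincomb l).
Proof.
elim: l => [|[[[al u] s] v] l IH] h.
  by exists [::]; split.
rewrite lincomb_cons; apply: ideal_cat; last by apply: IH => t tl; apply: h; rewrite inE tl orbT.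
by apply: ideal_scale; apply: (h _ (mem_head _ _)).
Qed.
End S.

Lemma B_ideal m u v : in_ideal (@R_G23 F) (umul u (binom F (Bw m) (Cw m)) v).
Proof.
elim: m u v => [|m IH] u v.
  by apply: ideal_gen; left; exists lb.
apply: (@ideal_eq _ _ (scale (-1) (umul u (binom F [:: lc; la; lb] [:: lb; la; lc])
   (pw m [:: la; lc] ++ lb :: v)) ++ umul (u ++ [:: lc; la]) (binom F (Bw m) (Cw m)) v)).
  move=> w; rewrite coef_cat coef_scale !coef_umul_binom /Bw /Cw /= -!catA /=.
  ring.
apply: ideal_cat; last exact: IH.
by apply: ideal_scale; apply: ideal_gen; right; right; left.
Qed.

Lemma ideal_equiv (p : ncpoly F) : in_ideal (@R'_G23 F) p <-> in_ideal (@R_G23 F) p.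
Proof.
split.
  move=> [l [h e]]; apply: (@ideal_eq _ _ (lincomb l)) => //.
  apply: ideal_lincomb => t /h [hR|[m [_ ->]]] u v; first exact: ideal_gen.
  exact: (B_ideal m).
by move=> [l [h e]]; exists l; split => // t /h; left.
Qed.
End Ideal.


Unset Implicit Arguments.
Theorem mainTheorem9 (F : fieldType) :
  (forall p : ncpoly F, in_ideal (@R'_G23 F) p <-> in_ideal (@R_G23 F) p) /\
  GS_basis (@R'_G23 F).
Proof. split; [exact: ideal_equiv | exact: GS]. Qed.
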